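(* Let $N\ge3$, $0\le p\le\lfloor N/2\rfloor-1$, $\nu_1,\dots,\nu_{p+1}\in\mathbb C$ and $\mathcal F=\mathcal F^{\mathcal P}_{p\prec0}(\nu_1,\dots,\nu_{p+1})$. Let $\mathfrak s\subset sl(N)$ be the subalgebra spanned by $E_{ij}$ ($i\ne j$) and $E_{ii}-E_{jj}$ with $p+2\le i,j\le N-p-1$ (a copy of $sl(N-2p-2)$). Then every $X\in\mathfrak s$ remains primitive in the twisted Hopf algebra: $\mathcal F\,\Delta(X)\,\mathcal F^{-1}=X\otimes1+1\otimes X$.
   Context: Work over $\mathbb C$ with $U=U(sl(N))$ with primitive generators ($\Delta(x)=x\otimes1+1\otimes x$). $E_{ij}$ are matrix units of $gl(N)$, $I=\sum_sE_{ss}$. $\xi$ is a formal parameter and all computations are in $\xi$-adically completed algebras $U[[\xi]]$, $(U\otimes U)[[\xi]]$. $\sigma_{ij}(c):=\ln(1+\xi cE_{ij})$, $H^{\mathcal P}_k:=E_{kk}-\frac1NI$. For $0\le k\le\lfloor N/2\rfloor-1$, $\mathcal F^{\mathcal P}_k(\nu):=\big(\prod_{s=k+2}^{N-k-1}\exp(\xi\nu E_{k+1,s}\otimes E_{s,N-k})\big)\exp(H^{\mathcal P}_{k+1}\otimes\sigma_{k+1,N-k}(\nu))$, and $\mathcal F^{\mathcal P}_{p\prec0}(\nu_1,\dots,\nu_{p+1}):=\mathcal F^{\mathcal P}_p(\nu_{p+1})\cdots\mathcal F^{\mathcal P}_0(\nu_1)$. *)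

(* Defs.v *)
From mathcomp Require Import all_boot all_algebra complex.
From mathcomp Require Import reals Rstruct.
Set Implicit Arguments. Unset Strict Implicit. Unset Printing Implicit Defensive.
Import GRing.Theory.
Local Open Scope ring_scope.

Definition C : numClosedFieldType := Rdefinitions.R[i].

(* Matrix unit E_{ij} of gl(N), with 1-based indices i, j in 1..N. *)
Definition Emx (N i j : nat) : 'M[C]_N :=
  \matrix_(a < N, b < N) (((a.+1 == i) && (b.+1 == j))%:R : C).

Definition HP (N k : nat) : 'M[C]_N := Emx N k k - (N%:R^-1 : C)%:M.

Section PS.
Variable B : algType C.

Definition ps := nat -> B.
Definition ps_const (b : B) : ps := fun n => if n == 0%N then b else 0.
Definition ps_one : ps := ps_const 1.
Definition ps_add (f g : ps) : ps := fun n => f n + g n.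
Definition ps_sub (f g : ps) : ps := fun n => f n - g n.
Definition ps_mul (f g : ps) : ps :=
  fun n => \sum_(i < n.+1) f i * g (n - i)%N.
Fixpoint ps_pow (f : ps) (k : nat) : ps :=
  if k is k'.+1 then ps_mul f (ps_pow f k') else ps_one.
Definition ps_xi (b : B) : ps := fun n => if n == 1%N then b else 0.
(* exp f = sum_k f^k / k!, for f with zero constant term (then the
   coefficient of xi^n only receives contributions from k <= n). *)
Definition ps_exp (f : ps) : ps :=
  fun n => \sum_(k < n.+1) ((k`!)%:R^-1 : C) *: ps_pow f k n.
Definition ps_log1p (f : ps) : ps :=
  fun n => \sum_(1 <= k < n.+1) (((-1) ^+ k.+1 / k%:R) : C) *: ps_pow f k n.
(* inverse of a series with constant term 1: f^{-1} = sum_k (1 - f)^k. *)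
Definition ps_inv (f : ps) : ps :=
  fun n => \sum_(k < n.+1) ps_pow (ps_sub ps_one f) k n.
End PS.

(* Realization of U(gl N) (x) U(gl N): two Lie algebra homomorphisms
   rho1 (X |-> X (x) 1) and rho2 (X |-> 1 (x) X) from gl(N) into an
   associative C-algebra B with commuting images. *)
Definition lie_hom (N : nat) (B : algType C) (rho : {linear 'M[C]_N -> B}) :=
  forall X Y : 'M[C]_N, rho (X *m Y - Y *m X) = rho X * rho Y - rho Y * rho X.

Definition commuting (N : nat) (B : algType C) (rho1 rho2 : 'M[C]_N -> B) :=
  forall X Y : 'M[C]_N, rho1 X * rho2 Y = rho2 Y * rho1 X.

Section Twist.
Variables (N : nat) (B : algType C) (rho1 rho2 : {linear 'M[C]_N -> B}).

Definition sigma2 (i j : nat) (c : C) : ps B :=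
  ps_log1p (ps_xi (c *: rho2 (Emx N i j))).

Definition FP (k : nat) (nu : C) : ps B :=
  ps_mul
    (\big[@ps_mul B/ps_one B]_(k.+2 <= s < N - k)
        ps_exp (ps_xi (nu *: (rho1 (Emx N k.+1 s) * rho2 (Emx N s (N - k))))))
    (ps_exp (ps_mul (ps_const (rho1 (HP N k.+1))) (sigma2 k.+1 (N - k) nu))).

(* F^P_{p<0}(nu_1,...,nu_{p+1}) = F^P_p(nu_{p+1}) ... F^P_0(nu_1);
   nu is indexed from 1 (nu 0 is unused). *)
Fixpoint Fprec (p : nat) (nu : nat -> C) : ps B :=
  match p with
  | 0 => FP 0 (nu 1%N)
  | p'.+1 => ps_mul (FP p (nu p.+1)) (Fprec p' nu)
  end.
End Twist.

(* X lies in s = span{E_ij (i<>j), E_ii - E_jj : p+2 <= i,j <= N-p-1}: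
   X is supported on that index block and has trace 0. *)
Definition in_s (N p : nat) (X : 'M[C]_N) : Prop :=
  \tr X = 0 /\
  forall a b : 'I_N,
    ~~ [&& p.+2 <= a.+1, a.+1 <= N - p.+1, p.+2 <= b.+1 & b.+1 <= N - p.+1]%N ->
    X a b = 0.

(* Main.v *)
Require Import Defs.
From mathcomp Require Import all_boot all_algebra complex.
From Stdlib Require Import FunctionalExtensionality.
From mathcomp Require Import ring zify.
Set Implicit Arguments. Unset Strict Implicit. Unset Printing Implicit Defensive.
Import GRing.Theory Num.Theory.
Local Open Scope ring_scope.

Section PSL.
Variable B : algType C.

Definition ee (a : B) : ps B := fun n => ((n`!)%:R^-1 : C) *: a ^+ n.

Lemma pow_xi (a : B) k n :
  ps_pow (ps_xi a) k n = if k == n then a ^+ k else 0.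
Proof.
elim: k n => [|k IH] n /=.
  by rewrite /ps_one /ps_const; case: n.
rewrite /ps_mul; case: n => [|n].
  by rewrite big_ord_recl big_ord0 /ps_xi /= mul0r addr0.
rewrite big_ord_recl /ps_xi /= mul0r add0r big_ord_recl /= subSS subn0 IH.
rewrite big1 ?addr0; last by move=> i _; rewrite mul0r.
by rewrite eqSS; case: (k == n); rewrite ?exprS ?mulr0.
Qed.

Lemma exp_xi (a : B) : ps_exp (ps_xi a) = ee a.
Proof.
apply: functional_extensionality => n.
rewrite /ps_exp big_ord_recr /= big1 ?add0r.
  by rewrite pow_xi eqxx.
by move=> i _; rewrite pow_xi (ltn_eqF (ltn_ord i)) scaler0.
Qed.

Lemma fact_neq0 n : ((n`!)%:R : C) != 0.
Proof. by rewrite pnatr_eq0 -lt0n fact_gt0. Qed.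

Lemma ee_mul (a b : B) : a * b = b * a -> ps_mul (ee a) (ee b) = ee (a + b).
Proof.
move=> cab; apply: functional_extensionality => n.
rewrite /ps_mul /ee addrC (exprDn_comm n (commr_sym cab)) scaler_sumr.
apply: eq_bigr => i _.
rewrite -scalerAl -scalerAr scalerA.
have -> : b ^+ (n - i) * a ^+ i = a ^+ i * b ^+ (n - i).
  by apply: commrX; apply: commr_sym; apply: commrX.
rewrite -[_ *+ 'C(n, i)]scaler_nat scalerA; congr (_ *: _).
have hi : (i <= n)%N by rewrite -ltnS ltn_ord.
have := bin_fact hi => /(congr1 (fun m => (m%:R : C))).
rewrite !natrM => hf.
have h1 := fact_neq0 i; have h2 := fact_neq0 (n - i); have h3 := fact_neq0 n.
have hc : ('C(n, i)%:R : C) = n`!%:R / (i`!%:R * (n - i)`!%:R).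
  by rewrite -hf mulfK // mulf_neq0.
rewrite hc; field.
by rewrite h1 h2 h3.
Qed.

Lemma ee0 : ee 0 = ps_one B.
Proof.
apply: functional_extensionality => n; rewrite /ee /ps_one /ps_const.
case: n => [|n] /=; first by rewrite expr0 fact0 invr1 scale1r.
by rewrite expr0n scaler0.
Qed.

Lemma big_ee (r : seq nat) (a : nat -> B) :
  (forall x y, x \in r -> y \in r -> a x * a y = a y * a x) ->
  \big[@ps_mul B/ps_one B]_(s <- r) ee (a s) = ee (\sum_(s <- r) a s).
Proof.
elim: r => [|x r IH] hc; first by rewrite !big_nil ee0.
rewrite !big_cons IH; last by move=> y z hy hz; apply: hc; rewrite inE ?hy ?hz orbT.
apply: ee_mul; rewrite big_seq; apply: commr_sum => y hy.
by apply: hc; rewrite inE ?eqxx ?hy ?orbT.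
Qed.


Definition cd (d : B) (f : ps B) := forall n, f n * d = d * f n.

Lemma cd_mul d f g : cd d f -> cd d g -> cd d (ps_mul f g).
Proof.
move=> hf hg n; rewrite /ps_mul mulr_suml mulr_sumr; apply: eq_bigr => i _.
by rewrite -mulrA hg !mulrA hf.
Qed.

Lemma cd_const d c : c * d = d * c -> cd d (ps_const c).
Proof. by move=> h [|n] /=; rewrite /ps_const //= mul0r mulr0. Qed.

Lemma cd_one d : cd d (ps_one B).
Proof. by apply: cd_const; rewrite mul1r mulr1. Qed.

Lemma cd_xi d c : c * d = d * c -> cd d (ps_xi c).
Proof. by move=> h n; rewrite /ps_xi; case: (n == 1%N); rewrite ?mul0r ?mulr0. Qed.

Lemma cd_sub d f g : cd d f -> cd d g -> cd d (ps_sub f g).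
Proof. by move=> hf hg n; rewrite /ps_sub mulrBl mulrBr hf hg. Qed.

Lemma cd_pow d f k : cd d f -> cd d (ps_pow f k).
Proof. by move=> hf; elim: k => [|k IH] /=; [apply: cd_one | apply: cd_mul]. Qed.

Lemma cd_sumZ d (m n : nat) (c : nat -> C) (F : nat -> B) :
  (forall k, F k * d = d * F k) ->
  (\sum_(m <= k < n) c k *: F k) * d = d * \sum_(m <= k < n) c k *: F k.
Proof.
move=> h; rewrite mulr_suml mulr_sumr; apply: eq_bigr => k _.
by rewrite -scalerAl -scalerAr h.
Qed.

Lemma cd_exp d f : cd d f -> cd d (ps_exp f).
Proof.
move=> hf n; rewrite /ps_exp.
rewrite -(big_mkord xpredT (fun k => ((k`!)%:R^-1 : C) *: ps_pow f k n)).
by apply: cd_sumZ => k; apply: cd_pow.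
Qed.

Lemma cd_log1p d f : cd d f -> cd d (ps_log1p f).
Proof.
move=> hf n; rewrite /ps_log1p.
by apply: cd_sumZ => k; apply: cd_pow.
Qed.

Lemma cd_ee d c : c * d = d * c -> cd d (ee c).
Proof.
move=> h n; rewrite /ee -scalerAl -scalerAr; congr (_ *: _).
by apply: commr_sym; apply: commrX.
Qed.

Lemma cd_big d (r : seq nat) (F : nat -> ps B) :
  (forall s, s \in r -> cd d (F s)) -> cd d (\big[@ps_mul B/ps_one B]_(s <- r) F s).
Proof.
move=> h; rewrite big_seq; apply: big_ind; [exact: cd_one | exact: cd_mul | exact: h].
Qed.


Lemma mul_constr (f : ps B) (c : B) n : ps_mul f (ps_const c) n = f n * c.
Proof.
rewrite /ps_mul big_ord_recr /= subnn /= big1 ?add0r // => i _.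
by rewrite /ps_const subn_eq0 leqNgt ltn_ord /= mulr0.
Qed.

Lemma mul_constl (c : B) (h : ps B) n : ps_mul (ps_const c) h n = c * h n.
Proof.
rewrite /ps_mul big_ord_recl /= subn0 big1 ?addr0 // => i _.
by rewrite /ps_const /= mul0r.
Qed.

Lemma mul0_eq (f g : ps B) : ps_mul f g 0 = f 0 * g 0.
Proof. by rewrite /ps_mul big_ord1. Qed.

Lemma exp0_eq (f : ps B) : ps_exp f 0 = 1.
Proof. by rewrite /ps_exp big_ord1 /= /ps_one /ps_const /= fact0 invr1 scale1r. Qed.

Lemma big0_eq (r : seq nat) (F : nat -> ps B) :
  (forall s, F s 0 = 1) -> (\big[@ps_mul B/ps_one B]_(s <- r) F s) 0 = 1.
Proof.
move=> h; apply: (big_ind (fun f : ps B => f 0 = 1)) => //.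
by move=> f g hf hg; rewrite mul0_eq hf hg mulr1.
Qed.

Lemma pow_small (g : ps B) : g 0 = 0 -> forall k n, (n < k)%N -> ps_pow g k n = 0.
Proof.
move=> g0; elim=> [|k IH] n //= hn.
rewrite /ps_mul big1 // => i _.
case: i => [[|i]] /= hi; first by rewrite g0 mul0r.
by rewrite IH ?mulr0 //; lia.
Qed.

Lemma mul_one_l (H : ps B) n : ps_mul (ps_one B) H n = H n.
Proof. by rewrite /ps_one mul_constl mul1r. Qed.

Lemma mul_inv (f : ps B) : f 0 = 1 -> forall n, ps_mul f (ps_inv f) n = ps_one B n.
Proof.
move=> f0 n.
set g := ps_sub (ps_one B) f.
have g0 : g 0 = 0 by rewrite /g /ps_sub /ps_one /ps_const /= f0 subrr.
have wid : forall m, (m <= n)%N ->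
    \sum_(k < m.+1) ps_pow g k m = \sum_(k < n.+1) ps_pow g k m.
  move=> m hm; rewrite (big_ord_widen n.+1 (fun k => ps_pow g k m)) // big_mkcond /=.
  apply: eq_bigr => k _; case: ltnP => // hk.
  by rewrite pow_small.
rewrite /ps_mul /ps_inv.
transitivity (\sum_(i < n.+1) \sum_(k < n.+1) f i * ps_pow g k (n - i)%N).
  apply: eq_bigr => i _; rewrite -mulr_sumr -wid //. exact: leq_subr.
rewrite exchange_big /=.
have step : forall k, \sum_(i < n.+1) f i * ps_pow g k (n - i)%N
    = ps_pow g k n - ps_pow g k.+1 n.
  move=> k; rewrite [ps_pow g k.+1 n]/= /ps_mul.
  have -> : \sum_(i < n.+1) f i * ps_pow g k (n - i)%N =
      \sum_(i < n.+1) (ps_one B i - g i) * ps_pow g k (n - i)%N.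
    apply: eq_bigr => i _; congr (_ * _).
    by rewrite /g /ps_sub opprB addrC subrK.
  rewrite (eq_bigr (fun i : 'I_n.+1 => ps_one B i * ps_pow g k (n - i)%N
       - g i * ps_pow g k (n - i)%N)); last by move=> i _; rewrite mulrBl.
  by rewrite sumrB; congr (_ - _); exact: (mul_one_l (ps_pow g k) n).
rewrite (eq_bigr (fun k : 'I_n.+1 => ps_pow g k n - ps_pow g k.+1 n)); last by move=> k _; exact: step.
rewrite -(big_mkord xpredT (fun k => ps_pow g k n - ps_pow g k.+1 n)).
have := telescope_sumr (fun k => ps_pow g k n) (leq0n n.+1).
move=> ht.
rewrite -[LHS]opprK -sumrN.
rewrite (eq_bigr (fun k => ps_pow g k.+1 n - ps_pow g k n)); last by move=> k _; rewrite opprB.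
by rewrite ht pow_small // sub0r opprK.
Qed.

End PSL.

Section Mat.
Variable N : nat.

Lemma Emx_mul0 i j l m : j != l -> Emx N i j *m Emx N l m = 0.
Proof.
move=> hjl; apply/matrixP => a b; rewrite !mxE; apply: big1 => c _; rewrite !mxE.
case: (c.+1 =P j) => [hj|]; case: (c.+1 =P l) => [hl|]; rewrite ?andbF ?mulr0 ?mul0r //.
by move: hjl; rewrite -hj -hl eqxx.
Qed.

Lemma Emx_row0 i j (X : 'M[C]_N) :
  (forall t c : 'I_N, t.+1 = j -> X t c = 0) -> Emx N i j *m X = 0.
Proof.
move=> h; apply/matrixP => a b; rewrite !mxE; apply: big1 => c _; rewrite !mxE.
case: (c.+1 =P j) => [hj|]; rewrite ?andbF ?mul0r // (h c b hj) mulr0 //.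
Qed.

Lemma Emx_col0 i j (X : 'M[C]_N) :
  (forall t a : 'I_N, t.+1 = i -> X a t = 0) -> X *m Emx N i j = 0.
Proof.
move=> h; apply/matrixP => a b; rewrite !mxE; apply: big1 => c _; rewrite !mxE.
case: (c.+1 =P i) => [hi|]; rewrite ?andbF ?mulr0 // (h c a hi) mul0r //.
Qed.

Lemma EX_exp i (s : 'I_N) (X : 'M[C]_N) :
  Emx N i s.+1 *m X = \sum_(b < N) X s b *: Emx N i b.+1.
Proof.
apply/matrixP => a c; rewrite summxE.
have -> : \sum_(k < N) (X s k *: Emx N i k.+1) a c = X s c * Emx N i c.+1 a c.
  rewrite (bigD1 c) //=.
  have -> : \sum_(k < N | k != c) (X s k *: Emx N i k.+1) a c = 0 :> C.
    apply: big1 => k hk; rewrite !mxE eqSS.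
    have -> : (c == k :> nat) = false by apply/negbTE; rewrite eq_sym; apply: contra hk => /eqP /val_inj ->.
    by rewrite andbF mulr0.
  by rewrite addr0 mxE.
rewrite !mxE (bigD1 s) //=.
have -> : \sum_(t < N | t != s) Emx N i s.+1 a t * X t c = 0 :> C.
  apply: big1 => t ht; rewrite !mxE eqSS.
  have -> : (t == s :> nat) = false by apply/negbTE; apply: contra ht => /eqP /val_inj ->.
  by rewrite andbF mul0r.
by rewrite addr0 !mxE !eqxx !andbT mulrC.
Qed.

Lemma XE_exp j (s : 'I_N) (X : 'M[C]_N) :
  X *m Emx N s.+1 j = \sum_(a < N) X a s *: Emx N a.+1 j.
Proof.
apply/matrixP => x c; rewrite summxE.
have -> : \sum_(k < N) (X k s *: Emx N k.+1 j) x c = X x s * Emx N x.+1 j x c.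
  rewrite (bigD1 x) //=.
  have -> : \sum_(k < N | k != x) (X k s *: Emx N k.+1 j) x c = 0 :> C.
    apply: big1 => k hk; rewrite !mxE eqSS.
    have -> : (x == k :> nat) = false by apply/negbTE; rewrite eq_sym; apply: contra hk => /eqP /val_inj ->.
    by rewrite /= mulr0.
  by rewrite addr0 mxE.
rewrite !mxE (bigD1 s) //=.
have -> : \sum_(t < N | t != s) X x t * Emx N s.+1 j t c = 0 :> C.
  apply: big1 => t ht; rewrite !mxE eqSS.
  have -> : (t == s :> nat) = false by apply/negbTE; apply: contra ht => /eqP /val_inj ->.
  by rewrite mulr0.
by rewrite addr0 !mxE !eqxx.
Qed.
End Mat.

Lemma lie_comm N (B : algType C) (rho : {linear 'M[C]_N -> B}) :
  lie_hom rho -> forall M Y, M *m Y = Y *m M -> rho M * rho Y = rho Y * rho M.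
Proof.
move=> l M Y h; apply/eqP; rewrite -subr_eq0 -l h subrr linear0 //.
Qed.

Section Main.
Variables (N p : nat) (B : algType C) (rho1 rho2 : {linear 'M[C]_N -> B}).
Hypotheses (l1 : lie_hom rho1) (l2 : lie_hom rho2) (cm : commuting rho1 rho2).
Variable X : 'M[C]_N.

Lemma gen i j :
  \sum_(s < N) rho1 (Emx N i s.+1 *m X) * rho2 (Emx N s.+1 j) =
  \sum_(s < N) rho1 (Emx N i s.+1) * rho2 (X *m Emx N s.+1 j).
Proof.
rewrite (eq_bigr (fun s : 'I_N => \sum_(b < N) X s b *: (rho1 (Emx N i b.+1) * rho2 (Emx N s.+1 j)))); last first.
  move=> s _; rewrite EX_exp linear_sum mulr_suml; apply: eq_bigr => b _.
  by rewrite linearZ -scalerAl.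
rewrite [RHS](eq_bigr (fun s : 'I_N => \sum_(a < N) X a s *: (rho1 (Emx N i s.+1) * rho2 (Emx N a.+1 j)))); last first.
  move=> s _; rewrite XE_exp linear_sum mulr_sumr; apply: eq_bigr => a _.
  by rewrite linearZ -scalerAr.
by rewrite [RHS]exchange_big.
Qed.

End Main.

Lemma sum_ext (V : zmodType) (w : nat -> V) m n M :
  (1 <= m)%N -> (m <= n)%N -> (n <= M.+1)%N ->
  (forall s, (1 <= s <= M)%N -> ~~ (m <= s < n)%N -> w s = 0) ->
  \sum_(m <= s < n) w s = \sum_(s < M) w s.+1.
Proof.
move=> h1 h2 h3 hv.
rewrite -(big_mkord xpredT (fun s => w s.+1)).
have -> : \sum_(0 <= s < M) w s.+1 = \sum_(1 <= s < M.+1) w s by rewrite big_add1.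
rewrite (big_cat_nat h1 (leq_trans h2 h3)) /= (big_cat_nat h2 h3) /=.
rewrite [X in _ = X + _]big1_seq ?add0r; last first.
  move=> s /andP [_]; rewrite mem_index_iota => hs; apply: hv; lia.
rewrite [X in _ = _ + X]big1_seq ?addr0 //.
move=> s /andP [_]; rewrite mem_index_iota => hs; apply: hv; lia.
Qed.

Section Main2.
Variables (N p : nat) (B : algType C) (rho1 rho2 : {linear 'M[C]_N -> B}).
Hypotheses (l1 : lie_hom rho1) (l2 : lie_hom rho2) (cm : commuting rho1 rho2).
Variable X : 'M[C]_N.
Hypothesis Xsupp : forall a b : 'I_N,
    ~~ [&& (p.+2 <= a.+1)%N, (a.+1 <= N - p.+1)%N, (p.+2 <= b.+1)%N & (b.+1 <= N - p.+1)%N] ->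
    X a b = 0.
Hypotheses (hN : (3 <= N)%N) (hp : (p <= N./2 - 1)%N).

Let d := rho1 X + rho2 X.

Lemma Xrow (t c : 'I_N) : ~~ ((p.+2 <= t.+1) && (t.+1 <= N - p.+1))%N -> X t c = 0.
Proof. by move=> h; apply: Xsupp; apply: contra h => /and4P [-> -> _ _]. Qed.

Lemma Xcol (t c : 'I_N) : ~~ ((p.+2 <= c.+1) && (c.+1 <= N - p.+1))%N -> X t c = 0.
Proof. by move=> h; apply: Xsupp; apply: contra h => /and4P [_ _ -> ->]. Qed.

Variable k : nat.
Hypothesis hk : (k <= p)%N.

Lemma cH : rho1 (HP N k.+1) * d = d * rho1 (HP N k.+1).
Proof.
have e1 : Emx N k.+1 k.+1 *m X = 0.
  by apply: Emx_row0 => t c ht; apply: Xrow; apply/negP => /andP [h _]; lia.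
have e2 : X *m Emx N k.+1 k.+1 = 0.
  by apply: Emx_col0 => t a ht; apply: Xcol; apply/negP => /andP [h _]; lia.
rewrite /d mulrDr mulrDl (cm (HP N k.+1) X); congr (_ + _).
apply: lie_comm => //.
by rewrite /HP mulmxBl mulmxBr e1 e2 scalar_mxC.
Qed.

Lemma cE : rho2 (Emx N k.+1 (N - k)) * d = d * rho2 (Emx N k.+1 (N - k)).
Proof.
have e1 : Emx N k.+1 (N - k) *m X = 0.
  by apply: Emx_row0 => t c ht; apply: Xrow; apply/negP => /andP [_ h]; lia.
have e2 : X *m Emx N k.+1 (N - k) = 0.
  by apply: Emx_col0 => t a ht; apply: Xcol; apply/negP => /andP [h _]; lia.
rewrite /d mulrDr mulrDl -(cm X (Emx N k.+1 (N - k))); congr (_ + _).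
by apply: lie_comm => //; rewrite e1 e2.
Qed.

Variable nu0 : C.
Let u s := rho1 (Emx N k.+1 s).
Let v s := rho2 (Emx N s (N - k)).
Let t s := nu0 *: (u s * v s).

Lemma tcomm s r : s \in index_iota k.+2 (N - k) -> r \in index_iota k.+2 (N - k) ->
  t s * t r = t r * t s.
Proof.
rewrite !mem_index_iota => hs hr.
have uu : u s * u r = u r * u s.
  apply: lie_comm => //; rewrite !Emx_mul0 //; apply/eqP; lia.
have vv : v s * v r = v r * v s.
  apply: lie_comm => //; rewrite !Emx_mul0 //; apply/eqP; lia.
have vu : forall a b, v a * u b = u b * v a by move=> a b; rewrite /u /v cm.
rewrite /t -!scalerAl -!scalerAr; congr (_ *: (_ *: _)).
transitivity (u s * u r * (v s * v r)).
  by rewrite -!mulrA (mulrA (v s)) vu -mulrA.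
rewrite uu vv.
by rewrite -!mulrA (mulrA (u s)) -vu -mulrA.
Qed.

Let w s := rho1 (Emx N k.+1 s *m X) * v s - u s * rho2 (X *m Emx N s (N - k)).

Lemma tstep s : t s * d - d * t s = nu0 *: w s.
Proof.
rewrite /t -scalerAl -scalerAr -scalerBr; congr (_ *: _).
have eXE1 : X *m Emx N k.+1 s = 0.
  by apply: Emx_col0 => t0 a ht; apply: Xcol; apply/negP => /andP [h _]; lia.
have eE2X : Emx N s (N - k) *m X = 0.
  by apply: Emx_row0 => t0 c ht; apply: Xrow; apply/negP => /andP [_ h]; lia.
set a1 := rho1 X; set a2 := rho2 X.
have key : u s * v s * d - d * (u s * v s) =
    (u s * a1 - a1 * u s) * v s + u s * (v s * a2 - a2 * v s).
  have h1 : u s * v s * a1 = u s * a1 * v s by rewrite -mulrA -(cm X) mulrA.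
  have h2 : a2 * u s * v s = u s * a2 * v s by rewrite /u /a2 (cm _ X).
  rewrite /d -/a1 -/a2 mulrDr mulrDl mulrBl !mulrBr !mulrA h1 h2.
  by rewrite opprD addrACA.
rewrite key -l1 -l2 eXE1 eE2X subr0 sub0r linearN mulrN /w.
done.
Qed.

Lemma cT : (\sum_(k.+2 <= s < N - k) t s) * d = d * \sum_(k.+2 <= s < N - k) t s.
Proof.
apply/eqP; rewrite -subr_eq0 mulr_suml mulr_sumr -sumrB.
rewrite (eq_bigr (fun s => nu0 *: w s)); last by move=> s _; exact: tstep.
rewrite -scaler_sumr (@sum_ext _ w k.+2 (N - k) N) //; first last.
- move=> s hs hns; rewrite /w.
  have hs' : (s.-1 < N)%N by lia.
  have -> : s = (Ordinal hs').+1 by rewrite /= prednK //; lia.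
  have eE1X : Emx N k.+1 (Ordinal hs').+1 *m X = 0.
    apply: Emx_row0 => t0 c ht; apply: Xrow; apply/negP => /andP [h1 h2].
    move: ht hns => /= ht; lia.
  have eXE2 : X *m Emx N (Ordinal hs').+1 (N - k) = 0.
    apply: Emx_col0 => t0 a ht; apply: Xcol; apply/negP => /andP [h1 h2].
    move: ht hns => /= ht; lia.
  by rewrite eE1X eXE2 !linear0 mul0r mulr0 subrr.
- have := odd_double_half N; lia.
- lia.
rewrite /w sumrB gen // subrr scaler0 //.
Qed.

Lemma cFP : cd d (FP rho1 rho2 k nu0).
Proof.
rewrite /FP; apply: cd_mul.
  under eq_bigr => s _ do rewrite exp_xi.
  rewrite (big_ee (a := t)); first exact: cd_ee cT.
  exact: tcomm.
apply: cd_exp; apply: cd_mul; first exact: cd_const cH.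
apply: cd_log1p; apply: cd_xi.
by rewrite -scalerAl -scalerAr cE.
Qed.

End Main2.

Lemma FP0 N (B : algType C) (rho1 rho2 : {linear 'M[C]_N -> B}) k nu0 :
  FP rho1 rho2 k nu0 0 = 1.
Proof.
rewrite /FP mul0_eq exp0_eq big0_eq ?mulr1 // => s; exact: exp0_eq.
Qed.

Lemma Fprec0 N (B : algType C) (rho1 rho2 : {linear 'M[C]_N -> B}) q nu :
  Fprec rho1 rho2 q nu 0 = 1.
Proof.
elim: q => [|q IH] /=; first exact: FP0.
by rewrite mul0_eq FP0 IH mulr1.
Qed.

Theorem mainTheorem3 (N p : nat) (nu : nat -> C)
  (B : algType C) (rho1 rho2 : {linear 'M[C]_N -> B}) :
  (3 <= N)%N ->
  (p <= N./2 - 1)%N ->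
  lie_hom rho1 -> lie_hom rho2 -> commuting rho1 rho2 ->
  forall X : 'M[C]_N, in_s p X ->
  let F := Fprec rho1 rho2 p nu in
  let Delta := ps_const (rho1 X + rho2 X) in
  forall n : nat,
    ps_mul (ps_mul F Delta) (ps_inv F) n = Delta n.
Proof.
move=> hN hp l1 l2 cm X [_ Xs] F Delta n.
set d := rho1 X + rho2 X.
have cF : forall q, (q <= p)%N -> cd d (Fprec rho1 rho2 q nu).
  elim=> [|q IH] hq /=.
    exact: (cFP l1 l2 cm Xs hN hp (leq0n p)).
  apply: cd_mul; last by apply: IH; lia.
  exact: (cFP l1 l2 cm Xs hN hp hq).
have cFp := cF p (leqnn p).
rewrite /ps_mul.
transitivity (\sum_(i < n.+1) d * (F i * ps_inv F (n - i)%N)).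
  apply: eq_bigr => i _.
  by rewrite -/(ps_mul F Delta i) mul_constr -/d mulrA cFp.
rewrite -mulr_sumr -/(ps_mul F (ps_inv F) n) mul_inv; last exact: Fprec0.
by rewrite /Delta /ps_one /ps_const; case: n => [|n] /=; rewrite ?mulr1 ?mulr0.
Qed.
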